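(* Let $S$ be the group defined in the context, and define the subgroups $$2_A=\langle (v_1v_3)^2,(v_1v_2)^2,s^2,ts\rangle,\qquad 2_C=\langle (v_1v_3)^2,(v_1v_2)^2,s^2,v_1v_3ts\rangle.$$ Both are isomorphic to $(\mathbb{Z}/2)^4$. Then there is an outer (i.e. non-inner) automorphism $\alpha:S\to S$ that exchanges $2_A$ and $2_C$.
   Context: Let $S$ be the group generated by $v_1,v_2,v_3,s,t$, where $v_1,v_2,v_3$ commute, each has order $4$, and together generate $(\mathbb{Z}/4)^3$. The elements $s,t$ generate $D_8=\langle t,s\mid t^2=s^4=(ts)^2=1\rangle$, which acts on $(\mathbb{Z}/4)^3$ by conjugation. Writing $x^y=yxy^{-1}$, the action is $$v_1^t=v_3^{-1},\quad v_2^t=v_2^{-1},\quad v_1^s=v_2,\quad v_2^s=v_3,\quad v_3^s=v_2^{-1}v_1v_3.$$ So $S=(\mathbb{Z}/4)^3\rtimes D_8$. *)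

(* Defs.v *)
From mathcomp Require Import all_boot all_algebra all_fingroup all_solvable ring.
Set Implicit Arguments. Unset Strict Implicit. Unset Printing Implicit Defensive.
Import GRing.Theory.
Local Open Scope ring_scope.

(* Concrete model of S = (Z/4)^3 ⋊ D8 as a group of affine permutations of
   the set P = (Z/4)^3.  In MathComp, (p * q) x = q (p x) and x ^ y = y^-1 x y. *)
Definition P : finType := ('Z_4 * 'Z_4 * 'Z_4)%type.

Definition tr1 (x : P) : P := let: (a, b, c) := x in (a + 1, b, c).
Definition tr1i (x : P) : P := let: (a, b, c) := x in (a - 1, b, c).
Definition tr2 (x : P) : P := let: (a, b, c) := x in (a, b + 1, c).
Definition tr2i (x : P) : P := let: (a, b, c) := x in (a, b - 1, c).
Definition tr3 (x : P) : P := let: (a, b, c) := x in (a, b, c + 1).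
Definition tr3i (x : P) : P := let: (a, b, c) := x in (a, b, c - 1).
(* the linear map inverse to the paper's action of s (so that s v s^-1 is as in the paper) *)
Definition sf (x : P) : P := let: (a, b, c) := x in (a + b, c - a, a).
Definition sfi (x : P) : P := let: (a, b, c) := x in (c, a - c, b + c).
Definition tf (x : P) : P := let: (a, b, c) := x in (- c, - b, - a).

Lemma tr1K : cancel tr1 tr1i. Proof. by case=> [[a b] c] /=; rewrite addrK. Qed.
Lemma tr2K : cancel tr2 tr2i. Proof. by case=> [[a b] c] /=; rewrite addrK. Qed.
Lemma tr3K : cancel tr3 tr3i. Proof. by case=> [[a b] c] /=; rewrite addrK. Qed.
Lemma sfK : cancel sf sfi.
Proof. by case=> [[a b] c] /=; rewrite [a + b]addrC addrK subrK. Qed.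
Lemma tfK : cancel tf tf. Proof. by case=> [[a b] c] /=; rewrite !opprK. Qed.

Definition v1 : {perm P} := perm (can_inj tr1K).
Definition v2 : {perm P} := perm (can_inj tr2K).
Definition v3 : {perm P} := perm (can_inj tr3K).
Definition s : {perm P} := perm (can_inj sfK).
Definition t : {perm P} := perm (can_inj tfK).

Definition S : {group {perm P}} := <<[set v1; v2; v3; s; t]>>%G.

Definition twoA : {group {perm P}} :=
  <<[set ((v1 * v3) ^+ 2)%g; ((v1 * v2) ^+ 2)%g; (s ^+ 2)%g; (t * s)%g]>>%G.
Definition twoC : {group {perm P}} :=
  <<[set ((v1 * v3) ^+ 2)%g; ((v1 * v2) ^+ 2)%g; (s ^+ 2)%g; (v1 * v3 * t * s)%g]>>%G.

(* Sanity checks: the generators satisfy the defining relations of the paper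
   (written with MathComp products; e.g. s v1 s^-1 = v2 is s * v1 = v2 * s). *)
Section Sanity.
Local Open Scope group_scope.
Local Ltac pt := apply/permP => -[[a b] c];
  rewrite ?expgS ?expg1 !permM ?perm1 !permE /= ?permM ?permE /=; congr (_,_,_); ring.
Lemma rel_s_v1 : s * v1 = v2 * s. Proof. pt. Qed.
Lemma rel_s_v2 : s * v2 = v3 * s. Proof. pt. Qed.
Lemma rel_s_v3 : v2 * s * v3 = v1 * v3 * s. Proof. pt. Qed. (* v3^s = v2^-1 v1 v3 *)
Lemma rel_t_v1 : v3 * t * v1 = t. Proof. pt. Qed.           (* v1^t = v3^-1 *)
Lemma rel_t_v2 : v2 * t * v2 = t. Proof. pt. Qed.
Lemma rel_t2 : t ^+ 2 = 1. Proof. pt. Qed.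
Lemma rel_s4 : s ^+ 4 = 1. Proof. pt. Qed.
Lemma rel_ts2 : (t * s) ^+ 2 = 1. Proof. pt. Qed.
End Sanity.

(* Main.v *)
Require Import Defs.
From mathcomp Require Import all_boot all_algebra all_fingroup all_solvable ring.
Set Implicit Arguments. Unset Strict Implicit. Unset Printing Implicit Defensive.
Import GRing.Theory.

Local Open Scope ring_scope.
Definition z4s : seq 'Z_4 := [:: 0; 1; 2; 3].
Lemma memZ4 (a : 'Z_4) : a \in z4s.
Proof.
rewrite -(mem_map val_inj) (_ : map val z4s = [:: 0; 1; 2; 3]%N); last by vm_compute.
case: a => m hm /=.
have : (m < 4)%N by [].
by case: m {hm} => [|[|[|[|m]]]].
Qed.
Local Close Scope ring_scope.

Section Aff.
Local Open Scope ring_scope.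

Definition padd (p q : P) : P :=
  let: (a, b, c) := p in let: (a', b', c') := q in (a + a', b + b', c + c').
Definition pneg (p : P) : P := let: (a, b, c) := p in (- a, - b, - c).
Definition dot (r p : P) : 'Z_4 :=
  let: (r1, r2, r3) := r in let: (a, b, c) := p in r1 * a + r2 * b + r3 * c.
Definition Mat := (P * P * P)%type.
Definition Lmat (M : Mat) (p : P) : P :=
  let: (r1, r2, r3) := M in (dot r1 p, dot r2 p, dot r3 p).
Definition transp (M : Mat) : Mat :=
  let: ((a11, a12, a13), (a21, a22, a23), (a31, a32, a33)) := M in
  ((a11, a21, a31), (a12, a22, a32), (a13, a23, a33)).
Definition mmul (A B : Mat) : Mat :=
  let: (r1, r2, r3) := A in let: (c1, c2, c3) := transp B in
  ((dot r1 c1, dot r1 c2, dot r1 c3), (dot r2 c1, dot r2 c2, dot r2 c3),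
   (dot r3 c1, dot r3 c2, dot r3 c3)).
Definition I3 : Mat := ((1,0,0),(0,1,0),(0,0,1)).
Definition p0 : P := (0,0,0).
Definition e1 : P := (1,0,0).
Definition e2 : P := (0,1,0).
Definition e3 : P := (0,0,1).

Definition Aff := (Mat * P)%type.
Definition evf (x : Aff) (p : P) : P := padd (Lmat x.1 p) x.2.
Definition amul (x y : Aff) : Aff := (mmul y.1 x.1, padd (Lmat y.1 x.2) y.2).
Definition aid : Aff := (I3, p0).

Lemma z3 : (3 : 'Z_4) = -1. Proof. by apply/eqP. Qed.

Ltac crush := repeat match goal with
  | p : Finite.sort P |- _ => move: p; case=> [[? ?] ?]
  | p : ('Z_4 * 'Z_4 * 'Z_4)%type |- _ => move: p; case=> [[? ?] ?]
  | M : Mat |- _ => move: M; case=> [[? ?] ?]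
  | x : Aff |- _ => move: x; case=> [? ?]
  end; rewrite /evf /amul /pneg /padd /tr1 /tr2 /tr3 /sf /tf /= ?permE /= ?z3; try (repeat match goal with |- pair _ _ = pair _ _ => congr pair end; ring).

Lemma Lmat_mul A B p : Lmat A (Lmat B p) = Lmat (mmul A B) p.
Proof. crush. Qed.
Lemma Lmat_add A p q : Lmat A (padd p q) = padd (Lmat A p) (Lmat A q).
Proof. crush. Qed.
Lemma Lmat_I p : Lmat I3 p = p.
Proof. crush. Qed.
Lemma evf_mul x y p : evf y (evf x p) = evf (amul x y) p.
Proof. crush. Qed.
Lemma paddK p q : padd (padd p q) (pneg q) = p.
Proof. crush. Qed.

Definition Dset : seq Mat := [:: ((1,0,0),(0,1,0),(0,0,1)); ((1,1,0),(3,0,1),(1,0,0)); ((0,0,3),(0,3,0),(3,0,0)); ((0,1,1),(0,3,0),(1,1,0)); ((3,0,0),(1,0,3),(3,3,0)); ((0,3,3),(3,0,1),(0,0,3)); ((0,0,1),(1,0,3),(0,1,1)); ((3,3,0),(0,1,0),(0,3,3))].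
Definition dvals : seq P := [:: (0,0,0); (0,0,0); (3,0,3); (0,0,0); (3,0,3); (3,0,3); (0,0,0); (3,0,3)].
Definition delta (M : Mat) : P := nth p0 dvals (index M Dset).
Definition minv (M : Mat) : Mat := mmul M (mmul M M).

Lemma Dinv_check : all (fun M => mmul (minv M) M == I3) Dset.
Proof. by vm_compute. Qed.
Lemma Dmul_check : all (fun M => all (fun N => mmul M N \in Dset) Dset) Dset.
Proof. by vm_compute. Qed.
Lemma Dcoc_check : all (fun M => all (fun N =>
   delta (mmul N M) == padd (Lmat N (delta M)) (delta N)) Dset) Dset.
Proof. by vm_compute. Qed.

Definition ok (x : Aff) := x.1 \in Dset.

Lemma Dmul M N : M \in Dset -> N \in Dset -> mmul M N \in Dset.
Proof. by move=> hM hN; move/allP: Dmul_check => /(_ M hM) /allP /(_ N hN). Qed.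
Lemma Dcoc M N : M \in Dset -> N \in Dset ->
  delta (mmul N M) = padd (Lmat N (delta M)) (delta N).
Proof. by move=> hM hN; apply/eqP; move/allP: Dcoc_check => /(_ M hM) /allP /(_ N hN). Qed.
Lemma ok_mul x y : ok x -> ok y -> ok (amul x y).
Proof. by rewrite /ok /= => hx hy; apply: Dmul. Qed.

Lemma evf_inj x : ok x -> injective (evf x).
Proof.
move=> hx; apply: (can_inj (g := fun q => Lmat (minv x.1) (padd q (pneg x.2)))).
move=> p; rewrite /evf paddK Lmat_mul.
by move/allP: Dinv_check => /(_ _ hx) /eqP ->; rewrite Lmat_I.
Qed.

Definition ev (x : Aff) : {perm P} :=
  match injectiveP (evf x) with ReflectT i => perm i | ReflectF _ => 1%g end.

Lemma evE x : ok x -> ev x =1 evf x.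
Proof.
move=> hx p; rewrite /ev; case: injectiveP => [i|ni]; first by rewrite permE.
by case: ni; apply: evf_inj.
Qed.

Lemma evM x y : ok x -> ok y -> (ev x * ev y)%g = ev (amul x y).
Proof.
move=> hx hy; apply/permP => p.
by rewrite permM !evE ?ok_mul // evf_mul.
Qed.

Definition rep (g : {perm P}) : Aff :=
  let c0 := g p0 in
  (transp (padd (g e1) (pneg c0), padd (g e2) (pneg c0), padd (g e3) (pneg c0)), c0).

Lemma rep_ev x : ok x -> rep (ev x) = x.
Proof. move=> hx; rewrite /rep !evE //; clear hx; crush. Qed.


Definition Ms : Mat := ((1,1,0),(3,0,1),(1,0,0)).
Definition Mt : Mat := ((0,0,3),(0,3,0),(3,0,0)).
Definition rv1 : Aff := (I3, e1).
Definition rv2 : Aff := (I3, e2).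
Definition rv3 : Aff := (I3, e3).
Definition rs : Aff := (Ms, p0).
Definition rt : Aff := (Mt, p0).

Lemma ev_v1 : ev rv1 = v1.
Proof. apply/permP => p; rewrite evE // permE; crush. Qed.
Lemma ev_v2 : ev rv2 = v2.
Proof. apply/permP => p; rewrite evE // permE; crush. Qed.
Lemma ev_v3 : ev rv3 = v3.
Proof. apply/permP => p; rewrite evE // permE; crush. Qed.
Lemma ev_s : ev rs = s.
Proof. apply/permP => p; rewrite evE // permE; crush. Qed.
Lemma ev_t : ev rt = t.
Proof. apply/permP => p; rewrite evE // permE; crush. Qed.

Lemma ev1 : ev aid = 1%g.
Proof. apply/permP => p; rewrite evE // perm1; crush. Qed.

Definition SetA : {set {perm P}} := [set ev x | x : Aff & ok x].

Lemma SetA_group : group_set SetA.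
Proof.
apply/group_setP; split; first by apply/imsetP; exists aid; rewrite ?inE // ev1.
move=> _ _ /imsetP[x hx ->] /imsetP[y hy ->]; rewrite inE in hx; rewrite inE in hy.
apply/imsetP; exists (amul x y); first by rewrite inE; apply: ok_mul.
by rewrite evM.
Qed.

Canonical AG := Group SetA_group.

Lemma S_sub_A : S \subset AG.
Proof.
rewrite /S /= gen_subG; apply/subsetP => x.
rewrite !inE => /orP[/orP[/orP[/orP[|]|]|]|] /eqP ->; apply/imsetP;
  [exists rv1 | exists rv2 | exists rv3 | exists rs | exists rt];
  by rewrite ?inE ?ev_v1 ?ev_v2 ?ev_v3 ?ev_s ?ev_t.
Qed.

Lemma memS x : x \in S -> exists2 a, ok a & x = ev a.
Proof.
move=> /(subsetP S_sub_A) /imsetP[a]; rewrite inE => ha ->; by exists a.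
Qed.

Definition aalpha (x : Aff) : Aff := (x.1, padd x.2 (delta x.1)).
Definition alphaf (g : {perm P}) : {perm P} := ev (aalpha (rep g)).

Lemma aalpha_mul x y : ok x -> ok y -> aalpha (amul x y) = amul (aalpha x) (aalpha y).
Proof.
move=> hx hy; rewrite /aalpha /= Dcoc //.
move: (delta x.1) (delta y.1); clear hx hy => dx dy; crush.
Qed.

Lemma ok_aalpha x : ok (aalpha x) = ok x. Proof. by []. Qed.

Lemma alphaf_ev x : ok x -> alphaf (ev x) = ev (aalpha x).
Proof. by move=> hx; rewrite /alphaf rep_ev. Qed.

Lemma alpha_morphM : {in S &, {morph alphaf : x y / (x * y)%g}}.
Proof.
move=> _ _ /memS[a ha ->] /memS[b hb ->].
by rewrite (evM ha hb) !alphaf_ev ?ok_mul // (evM (x:=aalpha a) (y:=aalpha b)) ?ok_aalpha // aalpha_mul.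
Qed.

Canonical alpham := Morphism alpha_morphM.

Lemma alpha_inj : ('injm alpham)%g.
Proof.
apply/injmP => _ _ /memS[a ha ->] /memS[b hb ->] /=.
rewrite !alphaf_ev // => /(congr1 rep); rewrite !rep_ev //.
case: a b ha hb => [Ma ca] [Mb cb] /= ha hb [eM].
rewrite eM => /(congr1 (fun p => padd p (pneg (delta Mb)))); rewrite !paddK => ->.
by [].
Qed.

Lemma mem_gS x : x \in [set v1; v2; v3; s; t] -> x \in S.
Proof. by move=> h; rewrite /S /= mem_gen. Qed.
Lemma v1S : v1 \in S. Proof. by apply: mem_gS; rewrite !inE eqxx. Qed.
Lemma v2S : v2 \in S. Proof. by apply: mem_gS; rewrite !inE eqxx ?orbT. Qed.
Lemma v3S : v3 \in S. Proof. by apply: mem_gS; rewrite !inE eqxx ?orbT. Qed.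
Lemma sS : s \in S. Proof. by apply: mem_gS; rewrite !inE eqxx ?orbT. Qed.
Lemma tS : t \in S. Proof. by apply: mem_gS; rewrite !inE eqxx ?orbT. Qed.

Lemma aalpha_rv1 : aalpha rv1 = rv1. Proof. by apply/eqP; vm_compute. Qed.
Lemma aalpha_rv2 : aalpha rv2 = rv2. Proof. by apply/eqP; vm_compute. Qed.
Lemma aalpha_rv3 : aalpha rv3 = rv3. Proof. by apply/eqP; vm_compute. Qed.
Lemma aalpha_rs : aalpha rs = rs. Proof. by apply/eqP; vm_compute. Qed.
Lemma aalpha_rt : aalpha rt = amul (amul rv1 rv3) rt. Proof. by apply/eqP; vm_compute. Qed.

Lemma alphaf_t : alphaf t = (v1 * v3 * t)%g.
Proof. by rewrite -ev_t alphaf_ev // aalpha_rt -!evM // ev_v1 ev_v3. Qed.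
Lemma alphaf_v1 : alphaf v1 = v1. Proof. by rewrite -ev_v1 alphaf_ev // aalpha_rv1. Qed.
Lemma alphaf_v2 : alphaf v2 = v2. Proof. by rewrite -ev_v2 alphaf_ev // aalpha_rv2. Qed.
Lemma alphaf_v3 : alphaf v3 = v3. Proof. by rewrite -ev_v3 alphaf_ev // aalpha_rv3. Qed.
Lemma alphaf_s : alphaf s = s. Proof. by rewrite -ev_s alphaf_ev // aalpha_rs. Qed.

Lemma im_alpha : (alpham @* S)%g = S.
Proof.
apply/eqP; rewrite eqEcard card_injm ?alpha_inj // leqnn andbT.
have -> : (alpham @* S = alpham @* <<[set v1; v2; v3; s; t]>>)%g by [].
rewrite morphim_gen ?subset_gen // gen_subG; apply/subsetP => y /morphimP[x _].
rewrite !inE => /orP[/orP[/orP[/orP[|]|]|]|] /eqP -> -> /=;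
rewrite ?alphaf_v1 ?alphaf_v2 ?alphaf_v3 ?alphaf_s ?alphaf_t ?v1S ?v2S ?v3S ?sS //.
by rewrite !groupM ?v1S ?v3S ?tS.
Qed.

Definition alpha : {perm {perm P}} := aut alpha_inj im_alpha.

Lemma alphaE x : x \in S -> alpha x = alphaf x.
Proof. by move=> hx; rewrite /alpha autE. Qed.

Definition evalw (gs : seq Aff) (w : seq nat) : Aff :=
  foldr (fun i acc => amul (nth aid gs i) acc) aid w.
Definition W16 : seq (seq nat) :=
  [:: [::]; [:: 0]; [:: 1]; [:: 0; 1]; [:: 2]; [:: 0; 2]; [:: 1; 2]; [:: 0; 1; 2];
      [:: 3]; [:: 0; 3]; [:: 1; 3]; [:: 0; 1; 3]; [:: 2; 3]; [:: 0; 2; 3]; [:: 1; 2; 3];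
      [:: 0; 1; 2; 3]]%N.

Definition checkL (gs L : seq Aff) :=
  [&& all ok gs, all ok L, aid \in L, all (fun x => all (fun y => amul x y \in L) L) L &
   [&& all (fun g => g \in L) gs, uniq L,
      all (fun x => all (fun y => amul x y == amul y x) L) L &
      all (fun x => amul x x == aid) L]].

Lemma ok_nth gs i : all ok gs -> ok (nth aid gs i).
Proof.
move=> h; case: (ltnP i (size gs)) => hi; first by apply: (allP h); rewrite mem_nth.
by rewrite nth_default.
Qed.

Lemma ok_evalw gs w : all ok gs -> ok (evalw gs w).
Proof. by move=> h; elim: w => [|i w IH] //=; apply: ok_mul => //; apply: ok_nth. Qed.

Lemma evL_group (L : seq Aff) : all ok L -> aid \in L ->
  all (fun x => all (fun y => amul x y \in L) L) L -> group_set (ev @: L).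
Proof.
move=> hok hid hcl; apply/group_setP; split; first by apply/imsetP; exists aid; rewrite ?ev1.
move=> _ _ /imsetP[x hx ->] /imsetP[y hy ->].
apply/imsetP; exists (amul x y); first by move/allP: hcl => /(_ x hx) /allP /(_ y hy).
by rewrite evM //; [apply: (allP hok) | apply: (allP hok)].
Qed.

Lemma gen4E (g0 g1 g2 g3 : Aff) :
  let gs := [:: g0; g1; g2; g3] in let L := map (evalw gs) W16 in
  checkL gs L ->
  <<[set ev g0; ev g1; ev g2; ev g3]>>%g = ev @: L.
Proof.
move=> gs L /and5P[hgs hok hid hcl /and4P[hin _ _ _]].
apply/eqP; rewrite eqEsubset; apply/andP; split.
  pose G := Group (evL_group hok hid hcl).
  have -> : ev @: L = G by [].
  rewrite gen_subG.
  apply/subsetP => x; rewrite !inE => /orP[/orP[/orP[|]|]|] /eqP ->; apply/imsetP;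
  [exists g0 | exists g1 | exists g2 | exists g3] => //; apply: (allP hin);
  by rewrite !inE eqxx ?orbT.
apply/subsetP => _ /imsetP[z /mapP[w _ ->] ->].
elim: w => [|i w IH] /=; first by rewrite ev1 group1.
rewrite -evM ?ok_nth ?ok_evalw //; apply: groupM => //.
case: (ltnP i 4) => hi; last by rewrite nth_default // ev1 group1.
apply: mem_gen; move: hi; rewrite /gs.
by case: i => [|[|[|[|]]]] //= _; rewrite !inE eqxx ?orbT.
Qed.

Lemma checkL_props gs L : checkL gs L ->
  [/\ #|ev @: L| = size L, abelian (ev @: L) & (exponent (ev @: L) %| 2)%N].
Proof.
move=> /and5P[_ hok _ hcl /and4P[_ hu hcm hsq]].
have okL x : x \in L -> ok x by move=> hx; apply: (allP hok).
split.
- rewrite card_in_imset; first by apply/card_uniqP.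
  move=> x y hx hy /(congr1 rep); by rewrite !rep_ev ?okL.
- apply/centsP => _ /imsetP[x hx ->] _ /imsetP[y hy ->].
  rewrite /commute !evM ?okL //.
  by move/allP: hcm => /(_ x hx) /allP /(_ y hy) /eqP ->.
- apply/exponentP => _ /imsetP[x hx ->].
  by rewrite expgS expg1 evM ?okL // (eqP (allP hsq x hx)) ev1.
Qed.

Definition ra : Aff := let w := amul rv1 rv3 in amul w w.
Definition rb : Aff := let w := amul rv1 rv2 in amul w w.
Definition rc : Aff := amul rs rs.
Definition rd : Aff := amul rt rs.
Definition rdC : Aff := amul (amul (amul rv1 rv3) rt) rs.
Definition LA := map (evalw [:: ra; rb; rc; rd]) W16.
Definition LC := map (evalw [:: ra; rb; rc; rdC]) W16.

Lemma checkA : checkL [:: ra; rb; rc; rd] LA. Proof. by vm_compute. Qed.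
Lemma checkC : checkL [:: ra; rb; rc; rdC] LC. Proof. by vm_compute. Qed.
Lemma sizeA : size LA = 16%N. Proof. by []. Qed.
Lemma sizeC : size LC = 16%N. Proof. by []. Qed.

Lemma ev_ra : ev ra = ((v1 * v3) ^+ 2)%g.
Proof. by rewrite /ra -!evM // ev_v1 ev_v3 expgS expg1. Qed.
Lemma ev_rb : ev rb = ((v1 * v2) ^+ 2)%g.
Proof. by rewrite /rb -!evM // ev_v1 ev_v2 expgS expg1. Qed.
Lemma ev_rc : ev rc = (s ^+ 2)%g.
Proof. by rewrite /rc -!evM // ev_s expgS expg1. Qed.
Lemma ev_rd : ev rd = (t * s)%g.
Proof. by rewrite /rd -!evM // ev_s ev_t. Qed.
Lemma ev_rdC : ev rdC = (v1 * v3 * t * s)%g.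
Proof. by rewrite /rdC -!evM // ev_s ev_t ev_v1 ev_v3. Qed.

Lemma twoA_eq : (twoA : {set _}) = ev @: LA.
Proof. by rewrite -(gen4E checkA) /= ev_ra ev_rb ev_rc ev_rd. Qed.
Lemma twoC_eq : (twoC : {set _}) = ev @: LC.
Proof. by rewrite -(gen4E checkC) /= ev_ra ev_rb ev_rc ev_rdC. Qed.

Lemma twoA_sub : twoA \subset S.
Proof.
rewrite /twoA /= gen_subG; apply/subsetP => x.
by rewrite !inE => /orP[/orP[/orP[|]|]|] /eqP ->;
   rewrite ?groupX ?groupM ?v1S ?v2S ?v3S ?sS ?tS.
Qed.
Lemma twoC_sub : twoC \subset S.
Proof.
rewrite /twoC /= gen_subG; apply/subsetP => x.
by rewrite !inE => /orP[/orP[/orP[|]|]|] /eqP ->;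
   rewrite ?groupX ?groupM ?v1S ?v2S ?v3S ?sS ?tS.
Qed.

Lemma twoA_E : (twoA \in 'E_2^4(S))%g.
Proof.
have [hc ha he] := checkL_props checkA.
apply/pnElemP; split; first exact: twoA_sub.
  by rewrite abelemE // twoA_eq ha he.
by rewrite twoA_eq hc sizeA.
Qed.
Lemma twoC_E : (twoC \in 'E_2^4(S))%g.
Proof.
have [hc ha he] := checkL_props checkC.
apply/pnElemP; split; first exact: twoC_sub.
  by rewrite abelemE // twoC_eq ha he.
by rewrite twoC_eq hc sizeC.
Qed.



Definition bad (b : Aff) := [&& amul b (aalpha rv1) == amul rv1 b,
  amul b (aalpha rv2) == amul rv2 b, amul b (aalpha rv3) == amul rv3 b,
  amul b (aalpha rs) == amul rs b & amul b (aalpha rt) == amul rt b].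
Lemma bad_check : all (fun M => all (fun a => all (fun b => all (fun c =>
  ~~ bad (M, (a, b, c))) z4s) z4s) z4s) Dset.
Proof. by vm_compute. Qed.

Lemma notbad b : ok b -> ~~ bad b.
Proof.
case: b => M [[a1 a2] a3] hM.
move/allP: bad_check => /(_ M hM) /allP /(_ a1 (memZ4 _)) /allP /(_ a2 (memZ4 _))
  /allP /(_ a3 (memZ4 _)); exact.
Qed.

Lemma outer : ~ (exists2 y, y \in S & {in S, forall x, alpha x = (x ^ y)%g}).
Proof.
case=> y /memS[b hb ->] H.
have key r : ok r -> ev r \in S -> amul b (aalpha r) = amul r b.
  move=> hr hS; have := H _ hS; rewrite alphaE // alphaf_ev // => E.
  have : (ev b * ev (aalpha r))%g = (ev r * ev b)%g by rewrite E conjgE mulKVg.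
  by rewrite !evM ?ok_aalpha // => /(congr1 rep); rewrite !rep_ev // ok_mul ?ok_aalpha.
have h1 := key rv1 (erefl true) ltac:(by rewrite ev_v1 v1S).
have h2 := key rv2 (erefl true) ltac:(by rewrite ev_v2 v2S).
have h3 := key rv3 (erefl true) ltac:(by rewrite ev_v3 v3S).
have h4 := key rs (erefl true) ltac:(by rewrite ev_s sS).
have h5 := key rt (erefl true) ltac:(by rewrite ev_t tS).
move/negP: (notbad hb); apply; apply/and5P; split; apply/eqP.
- exact: h1.
- exact: h2.
- exact: h3.
- exact: h4.
- exact: h5.
Qed.

Lemma okLA : all ok LA. Proof. by vm_compute. Qed.
Lemma okLC : all ok LC. Proof. by vm_compute. Qed.
Lemma aLA : all (fun z => aalpha z \in LC) LA. Proof. by vm_compute. Qed.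
Lemma aLC : all (fun z => aalpha z \in LA) LC. Proof. by vm_compute. Qed.

Lemma imA : (alpha @: twoA)%g = twoC.
Proof.
apply/eqP; rewrite eqEcard card_imset; last exact: perm_inj.
have [hcA _ _] := checkL_props checkA; have [hcC _ _] := checkL_props checkC.
rewrite twoA_eq twoC_eq hcA hcC sizeA sizeC leqnn andbT.
apply/subsetP => _ /imsetP[_ /imsetP[z hz ->] ->].
have hok : ok z := allP okLA z hz.
have hS : ev z \in S.
  have hA : ev z \in (twoA : {set _}) by rewrite twoA_eq; apply/imsetP; exists z.
  exact: (subsetP twoA_sub _ hA).
rewrite (alphaE hS) (alphaf_ev hok).
apply/imsetP; exists (aalpha z); last by [].
exact: (allP aLA).
Qed.

Lemma imC : (alpha @: twoC)%g = twoA.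
Proof.
apply/eqP; rewrite eqEcard card_imset; last exact: perm_inj.
have [hcA _ _] := checkL_props checkA; have [hcC _ _] := checkL_props checkC.
rewrite twoA_eq twoC_eq hcA hcC sizeA sizeC leqnn andbT.
apply/subsetP => _ /imsetP[_ /imsetP[z hz ->] ->].
have hok : ok z := allP okLC z hz.
have hS : ev z \in S.
  have hA : ev z \in (twoC : {set _}) by rewrite twoC_eq; apply/imsetP; exists z.
  exact: (subsetP twoC_sub _ hA).
rewrite (alphaE hS) (alphaf_ev hok).
apply/imsetP; exists (aalpha z); last by [].
exact: (allP aLC).
Qed.

End Aff.

Theorem lemma2p5 :
  (twoA \in 'E_2^4(S))%g /\ (twoC \in 'E_2^4(S))%g /\
  exists2 alpha : {perm {perm P}}, alpha \in Aut S &
    [/\ ~ (exists2 y, y \in S & {in S, forall x, alpha x = (x ^ y)%g}),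
        (alpha @: twoA)%g = twoC
      & (alpha @: twoC)%g = twoA].
Proof.
split; first exact: twoA_E. split; first exact: twoC_E.
exists alpha; first exact: Aut_aut.
by split; [exact: outer | exact: imA | exact: imC].
Qed.
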